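(* Let $G=(V,E)$ be a simple graph with $V=\{1,\dots,n\}$, adjacency matrix $A$, and let $w\in\mathbb{R}^n$ with $w\geq 0$. Then $$\alpha_w(G)=\max\{w^\top x \mid x \text{ solves } \mathrm{LCP}(A+I,-\mathbf{e})\},$$ where $I$ is the $n\times n$ identity matrix and $\mathbf{e}$ is the all-ones vector in $\mathbb{R}^n$.
   Context: A simple graph is a finite undirected graph without self-loops or multiple edges; its adjacency matrix $A=[a_{ij}]$ has $a_{ij}=1$ if $\{i,j\}\in E$ and $0$ otherwise. An independent set is a set of pairwise non-adjacent vertices. For a weight vector $w$, $\alpha_w(G):=\max\{\sum_{i\in S}w_i \mid S\subseteq V \text{ independent}\}$. For $M\in\mathbb{R}^{n\times n}$, $q\in\mathbb{R}^n$, a vector $x\in\mathbb{R}^n$ solves the linear complementarity problem $\mathrm{LCP}(M,q)$ if $x\geq 0$, $Mx+q\geq 0$ and $x^\top(Mx+q)=0$. *)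

(* Defs.v *)
From mathcomp Require Import all_boot all_order all_algebra.
Set Implicit Arguments. Unset Strict Implicit. Unset Printing Implicit Defensive.
Import Order.TTheory GRing.Theory Num.Theory.
Local Open Scope ring_scope.

Definition simple_graph (n : nat) (e : rel 'I_n) : Prop :=
  irreflexive e /\ symmetric e.

Definition adjmx (R : nzRingType) (n : nat) (e : rel 'I_n) : 'M[R]_n :=
  \matrix_(i, j) (if e i j then 1 else 0).

Definition independent (n : nat) (e : rel 'I_n) (S : {set 'I_n}) : bool :=
  [forall i in S, forall j in S, ~~ e i j].

(* alpha_w(G) = max over independent sets S of sum_{i in S} w_i.
   The empty set is independent (value 0), so the max is >= 0 and
   the big max with neutral element 0 computes exactly this maximum. *)
Definition alpha_w (R : realDomainType) (n : nat) (e : rel 'I_n) (w : 'cV[R]_n) : R :=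
  \big[Num.max/0]_(S : {set 'I_n} | independent e S) \sum_(i in S) w i ord0.

Definition solves_LCP (R : numDomainType) (n : nat) (M : 'M[R]_n) (q x : 'cV[R]_n) : Prop :=
  (forall i, 0 <= x i ord0) /\
  (forall i, 0 <= (M *m x + q) i ord0) /\
  (x^T *m (M *m x + q)) ord0 ord0 = 0.

Definition ones_cV (R : nzRingType) (n : nat) : 'cV[R]_n := const_mx 1.

(* Main.v *)
Require Import Defs.
From mathcomp Require Import all_boot all_order all_algebra.
Import Order.TTheory GRing.Theory Num.Theory.
Local Open Scope ring_scope.

Lemma eqle {R : realDomainType} (a b : R) : a = b -> a <= b.
Proof. by move=> ->. Qed.

Lemma sum_sub_le (R : realDomainType) n (P : pred 'I_n) (A B : {set 'I_n}) (F : 'I_n -> R) :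
  (forall i, 0 <= F i) -> A \subset B ->
  \sum_(j in A | P j) F j <= \sum_(j in B | P j) F j.
Proof.
move=> F0 AB.
rewrite [X in _ <= X](bigID (fun j => j \in A)) /= -[X in X <= _]addr0.
apply: lerD; last by apply: sumr_ge0.
apply: eqle; apply: eq_bigl => j.
case jA: (j \in A); rewrite ?andbT ?andbF //=.
by rewrite (subsetP AB j jA).
Qed.

Lemma key (R : realDomainType) n (e : rel 'I_n) (W X : 'I_n -> R) :
  irreflexive e -> symmetric e -> (forall i, 0 <= W i) -> (forall i, 0 <= X i) ->
  forall S : {set 'I_n},
  (forall i, i \in S -> \sum_(j in S | (j == i) || e i j) X j <= 1) ->
  exists I : {set 'I_n}, [/\ independent e I, I \subset S &
     \sum_(i in S) W i * X i <= \sum_(i in I) W i].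
Proof.
move=> irr sym W0 X0 S.
have base : exists I : {set 'I_n}, [/\ independent e I, I \subset set0 &
     \sum_(i in set0) W i * X i <= \sum_(i in I) W i].
  exists set0; split; last by rewrite !big_set0.
    by apply/forallP=> i; rewrite inE.
  by apply/subsetP.
elim: {S}#|S| {-2}S (leqnn #|S|) => [|k IH] S.
  by rewrite leqn0 cards_eq0 => /eqP -> _.
move=> cS hS.
case: (set_0Vmem S) => [-> // | [v0 v0S]].
case: (arg_maxP W v0S) => v vS0 vmax.
have vS : v \in S := vS0.
pose N := [set j | (j == v) || e v j].
pose S' := S :\: N.
have S'S : S' \subset S by apply: subsetDl.
have cS' : (#|S'| <= k)%N.
  have : S' \subset S :\ v.
    apply/subsetP=> j; rewrite !inE negb_or => /andP[/andP[jv _] ->].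
    by rewrite jv.
  move/subset_leq_card; rewrite (cardsD1 v S) vS add1n in cS.
  by move=> h; apply: leq_trans h _; rewrite -ltnS.
have hS' : forall i, i \in S' -> \sum_(j in S' | (j == i) || e i j) X j <= 1.
  move=> i iS'; apply: le_trans (hS i (subsetP S'S i iS')).
  exact: sum_sub_le.
have [I' [indI' I'S' leI']] := IH S' cS' hS'.
exists (v |: I').
have vI' : v \notin I'.
  apply/negP=> /(subsetP I'S'); by rewrite !inE eqxx.
have I'N : forall j, j \in I' -> ~~ e v j.
  move=> j /(subsetP I'S'); rewrite !inE negb_or => /andP[/andP[_ ->]].
  done.
split.
- apply/forallP=> i; apply/implyP; rewrite !inE => /orP[/eqP->|iI];
  apply/forallP=> j; apply/implyP; rewrite !inE => /orP[/eqP->|jI].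
  + by rewrite irr.
  + exact: I'N.
  + by rewrite sym; apply: I'N.
  + by move: indI' => /forallP/(_ i)/implyP/(_ iI)/forallP/(_ j)/implyP/(_ jI).
- apply/subsetP=> j; rewrite !inE => /orP[/eqP->//|/(subsetP I'S')].
  exact: (subsetP S'S).
rewrite big_setU1 //= (bigID (fun j => j \in N)) /=.
apply: lerD.
  apply: le_trans (_ : \sum_(i in S | i \in N) W v * X i <= _).
    apply: ler_sum => i /andP[iS _]; apply: ler_wpM2r => //; exact: vmax.
  rewrite -mulr_sumr -[X in _ <= X]mulr1; apply: ler_wpM2l => //.
  apply: le_trans (hS v vS); apply: eqle; apply: eq_bigl => j.
  by rewrite inE.
apply: le_trans leI'; apply: eqle; apply: eq_bigl => j.
by rewrite !inE andbC.
Qed.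

Lemma Mx (R : realFieldType) n (e : rel 'I_n) (x : 'cV[R]_n) i :
  irreflexive e ->
  ((adjmx R e + 1%:M) *m x) i ord0 = \sum_(j | (j == i) || e i j) x j ord0.
Proof.
move=> irr; rewrite mxE [RHS]big_mkcond /=; apply: eq_bigr => j _.
rewrite !mxE eq_sym; case: (eqVneq i j) => [<-|nij]; first by rewrite irr /= add0r mul1r.
by rewrite addr0; case: (e i j); rewrite /= ?mul1r ?mul0r.
Qed.

Lemma LCPi (R : realFieldType) n (e : rel 'I_n) (x : 'cV[R]_n) i :
  irreflexive e ->
  ((adjmx R e + 1%:M) *m x - ones_cV R n) i ord0 = \sum_(j | (j == i) || e i j) x j ord0 - 1.
Proof. by move=> irr; rewrite mxE Mx // !mxE. Qed.

Lemma dotE (R : realFieldType) n (x y : 'cV[R]_n) :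
  (x^T *m y) ord0 ord0 = \sum_i x i ord0 * y i ord0.
Proof. by rewrite mxE; apply: eq_bigr => i _; rewrite mxE. Qed.

Lemma sum_supp (R : realFieldType) n (S : {set 'I_n}) (P : pred 'I_n) (F : 'I_n -> R) :
  (forall i, i \notin S -> F i = 0) -> \sum_(i | P i) F i = \sum_(i in S | P i) F i.
Proof.
move=> h; rewrite (bigID (fun i => i \in S)) /= [X in _ + X]big1 ?addr0.
  by apply: eq_bigl => i; rewrite andbC.
by move=> i /andP[_ /h].
Qed.

Theorem theorem1 (R : realFieldType) (n : nat) (e : rel 'I_n) (w : 'cV[R]_n) :
  simple_graph e ->
  (forall i, 0 <= w i ord0) ->
  (exists x : 'cV[R]_n,
      solves_LCP (adjmx R e + 1%:M) (- ones_cV R n) x /\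
      (w^T *m x) ord0 ord0 = alpha_w e w) /\
  (forall x : 'cV[R]_n,
      solves_LCP (adjmx R e + 1%:M) (- ones_cV R n) x ->
      (w^T *m x) ord0 ord0 <= alpha_w e w).
Proof.
move=> [irr sym] w0.
pose F := fun J : {set 'I_n} => \sum_(i in J) w i ord0.
have aub : forall J, independent e J -> F J <= alpha_w e w.
  by move=> J indJ; apply: le_bigmax_cond.
split; last first.
  move=> x [x0 [y0 comp]].
  rewrite dotE in comp.
  have hz := psumr_eq0P (fun i _ => mulr_ge0 (x0 i) (y0 i)) comp.
  pose S := [set i | x i ord0 != 0].
  have hS : forall i, i \in S ->
      \sum_(j in S | (j == i) || e i j) x j ord0 <= 1.
    move=> i; rewrite inE => xi.
    have := hz i isT; move/eqP; rewrite mulf_eq0 (negbTE xi) /= LCPi // subr_eq0.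
    move/eqP => <-; apply: eqle; apply: esym; apply: sum_supp.
    by move=> j; rewrite inE negbK => /eqP.
  have [I [indI _ leI]] := @key _ _ _ (fun i => w i ord0) (fun i => x i ord0) irr sym w0 x0 _ hS.
  rewrite dotE; apply: le_trans (aub I indI).
  apply: le_trans leI; apply: eqle.
  rewrite (sum_supp _ _ S); first by apply: eq_bigl => i; rewrite andbT.
  by move=> i; rewrite inE negbK => /eqP ->; rewrite mulr0.
have ind0 : independent e set0 by apply/forallP => i; rewrite inE.
have F0 : forall J, 0 <= F J by move=> J; apply: sumr_ge0.
have aE : alpha_w e w = F [arg max_(J > set0 | independent e J) F J]%O.
  by rewrite /alpha_w (@bigmax_eq_arg _ _ _ _ set0 _ F ind0).
case: (arg_maxP F ind0) aE => J1 J1ind _ aE.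
pose P J := independent e J && (F J == alpha_w e w).
have PJ1 : P J1 by rewrite /P J1ind aE eqxx.
case: (arg_maxnP (fun J : {set 'I_n} => #|J|) PJ1) => J2 /andP[J2ind /eqP FJ2] J2max.
have indJ2 : forall i j, i \in J2 -> j \in J2 -> ~~ e i j.
  by move=> i j iJ jJ; move: J2ind => /forallP/(_ i)/implyP/(_ iJ)/forallP/(_ j)/implyP/(_ jJ).
have maxl : forall i, i \notin J2 -> exists2 j, j \in J2 & e i j.
  move=> i iJ; case: (boolP [exists j in J2, e i j]) => [/exists_inP[j jJ eij]|/exists_inP nex].
    by exists j.
  exfalso.
  have indU : independent e (i |: J2).
    apply/forallP=> a; apply/implyP; rewrite !inE => /orP[/eqP->|aJ];
    apply/forallP=> b; apply/implyP; rewrite !inE => /orP[/eqP->|bJ].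
    + by rewrite irr.
    + by apply/negP => eib; apply: nex; exists b.
    + by rewrite sym; apply/negP => eib; apply: nex; exists a.
    + exact: indJ2.
  have FU : F (i |: J2) = w i ord0 + F J2 by rewrite /F big_setU1.
  have : P (i |: J2).
    rewrite /P indU /=; apply/eqP/le_anti; rewrite aub //= FU FJ2 lerDr.
    exact: w0.
  by move/J2max; rewrite cardsU1 iJ add1n /= ltnn.
pose x : 'cV[R]_n := \col_i (if i \in J2 then 1 else 0).
have sJ : forall i, i \in J2 -> \sum_(j | (j == i) || e i j) x j ord0 = 1.
  move=> i iJ; rewrite (bigD1 i) /= ?eqxx // big1 ?addr0; first by rewrite mxE iJ.
  move=> j /andP[/orP[/eqP->|eij] nji]; first by rewrite eqxx in nji.
  rewrite mxE; case jJ: (j \in J2) => //.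
  by rewrite (negbTE (indJ2 i j iJ jJ)) in eij.
have sN : forall i, i \notin J2 -> 1 <= \sum_(j | (j == i) || e i j) x j ord0.
  move=> i iJ; have [j jJ eij] := maxl i iJ.
  rewrite (bigD1 j) /= ?eij ?orbT // mxE jJ lerDl.
  by apply: sumr_ge0 => k _; rewrite mxE; case: ifP.
exists x; split.
  split; first by move=> i; rewrite mxE; case: ifP.
  split.
    move=> i; rewrite LCPi // subr_ge0; case: (boolP (i \in J2)) => iJ.
      by rewrite sJ.
    exact: sN.
  rewrite dotE big1 // => i _; rewrite LCPi // mxE; case: ifP => iJ.
    by rewrite sJ // subrr mulr0.
  by rewrite mul0r.
rewrite dotE -FJ2 /F [RHS]big_mkcond; apply: eq_bigr => i _; rewrite !mxE.
by case: ifP; rewrite ?mulr1 ?mulr0.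
Qed.
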